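(* Let $T_1,T_2$ be tables joined on column $J$ with frequencies $a_v,b_v$ ($v\in\mathcal U$), let $\epsilon_1,\epsilon_2\in(0,1]$ and $p\in[\max\{\epsilon_1,\epsilon_2\},1]$. If $S_1=\mathrm{UBS}_{p,\epsilon_1/p}(T_1,J)$ and $S_2=\mathrm{UBS}_{p,\epsilon_2/p}(T_2,J)$ and $\hat J_{\mathrm{count}}=\frac{p}{\epsilon_1\epsilon_2}|S_1\bowtie_J S_2|$, then $$\mathrm{Var}[\hat J_{\mathrm{count}}] = \Big(\frac1p-1\Big)\gamma_{2,2} + \Big(\frac1{\epsilon_2}-\frac1p\Big)\gamma_{2,1} + \Big(\frac1{\epsilon_1}-\frac1p\Big)\gamma_{1,2} + \Big(\frac{p}{\epsilon_1\epsilon_2}-\frac1{\epsilon_1}-\frac1{\epsilon_2}+\frac1p\Big)\gamma_{1,1},$$ where $\gamma_{i,j}=\sum_{v\in\mathcal U}a_v^ib_v^j$.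
   Context: $T_1,T_2$ are finite multisets of tuples with a join attribute $J$ taking values in a finite set $\mathcal U$; $a_v$ (resp. $b_v$) is the number of tuples of $T_1$ (resp. $T_2$) with $J$-value $v$. $S_1\bowtie_J S_2$ is the set of pairs $(t_1,t_2)\in S_1\times S_2$ with $t_1.J=t_2.J$. $\mathrm{UBS}_{p,q}(T,J)$: given a hash function $h:\mathcal U\to[0,1]$, each tuple $t\in T$ with $h(t.J)<p$ is included independently with probability $q$; others are excluded. The values $h(v)$ are independent uniform on $[0,1]$, the same $h$ is used for both tables, and the Bernoulli coins are independent across all tuples and independent of $h$. (Note $\hat J_{\mathrm{count}}=|S_1\bowtie_J S_2|/(p q_1 q_2)$ with $q_i=\epsilon_i/p$.) *)

(* Defs.v *)
From HB Require Import structures.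
From mathcomp Require Import all_boot all_order all_algebra.
From mathcomp Require Import all_classical all_reals all_analysis.
Set Implicit Arguments.
Unset Strict Implicit.
Unset Printing Implicit Defensive.
Import Order.TTheory GRing.Theory Num.Theory.
Import numFieldTopology.Exports.
Local Open Scope classical_set_scope.
Local Open Scope ring_scope.

(* Tables.  Only the join attribute J matters; a table with frequencies
   [a : U -> nat] is modelled as the multiset of tuples indexed by pairs
   (v, k) with k < a v, the tuple (v,k) having J-value v. *)

Definition ubs_in {T : Type} {R : realType} (U : finType) (f : U -> nat)
  (p : R) (h : U -> T -> R) (c : forall v : U, 'I_(f v) -> T -> bool)
  (v : U) (k : 'I_(f v)) (w : T) : bool :=
  (h v w < p) && c v k w.

Definition join_size {T : Type} {R : realType} (U : finType) (a b : U -> nat)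
  (p : R) (h : U -> T -> R)
  (c1 : forall v : U, 'I_(a v) -> T -> bool)
  (c2 : forall v : U, 'I_(b v) -> T -> bool) (w : T) : R :=
  \sum_(v1 : U) \sum_(k1 < a v1) \sum_(v2 : U) \sum_(k2 < b v2)
     ((v1 == v2) && ubs_in p h c1 k1 w && ubs_in p h c2 k2 w)%:R.

Definition gamma {R : realType} (U : finType) (a b : U -> nat) (i j : nat) : R :=
  \sum_(v : U) (a v)%:R ^+ i * (b v)%:R ^+ j.

(* Mutual independence of the whole (finite) family consisting of the hash
   values h v (v in U) and all Bernoulli coins c1 v k, c2 v k: the product
   rule for every choice of measurable sets (choosing setT for some members
   gives the product rule for every subfamily). *)
Definition ubs_independent d (T : measurableType d) (R : realType)
  (P : probability T R) (U : finType) (a b : U -> nat) (h : U -> T -> R)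
  (c1 : forall v : U, 'I_(a v) -> T -> bool)
  (c2 : forall v : U, 'I_(b v) -> T -> bool) : Prop :=
  forall (A : U -> set R) (B1 : forall v : U, 'I_(a v) -> set bool)
         (B2 : forall v : U, 'I_(b v) -> set bool),
    (forall v, measurable (A v)) ->
    P [set w | (forall v, A v (h v w)) /\
               (forall v (k : 'I_(a v)), B1 v k (c1 v k w)) /\
               (forall v (k : 'I_(b v)), B2 v k (c2 v k w))]
    = ((\prod_(v : U) P (h v @^-1` A v)) *
       (\prod_(v : U) \prod_(k < a v) P (c1 v k @^-1` B1 v k)) *
       (\prod_(v : U) \prod_(k < b v) P (c2 v k @^-1` B2 v k)))%E.

(* Main.v *)
Require Import Defs.
From HB Require Import structures.
From mathcomp Require Import all_boot all_order all_algebra.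
From mathcomp Require Import all_classical all_reals all_analysis.
From mathcomp Require Import ring lra measurable_realfun.
Import Order.TTheory GRing.Theory Num.Theory.
Local Open Scope classical_set_scope.
Local Open Scope ring_scope.

Section A.
Variables (R : realType) (U : finType) (a b : U -> nat).

Lemma sum_if (I : finType) (i0 : I) (G0 : R) (K : I -> R) :
  \sum_i (if i0 == i then G0 else K i) = \sum_i K i + (G0 - K i0).
Proof.
rewrite (bigD1 i0) // [in RHS](bigD1 i0) //= eqxx.
rewrite (eq_bigr K); last by move=> i /negbTE; rewrite eq_sym => ->.
ring.
Qed.

Arguments sum_if {I} i0 G0 K.

Lemma sum_ord_const n (x : R) : \sum_(i < n) x = x *+ n.
Proof. by rewrite sumr_const card_ord. Qed.

Lemma sumA (n : nat) (q : R) :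
  \sum_(k < n) \sum_(k' < n) (if (k == k' :> nat) then q else q * q) =
  n%:R * (n%:R * (q * q) + (q - q * q)).
Proof.
under eq_bigr => k _ do rewrite (sum_if k q (fun _ => q * q)).
rewrite big_split /= !sum_ord_const.
ring.
Qed.

Definition pv (p q1 q2 : R) v v' (k1 : 'I_(a v)) (k2 : 'I_(b v)) (k1' : 'I_(a v')) (k2' : 'I_(b v')) :=
  if v == v' then p * (if (k1 == k1' :> nat) then q1 else q1 * q1)
                     * (if (k2 == k2' :> nat) then q2 else q2 * q2)
   else (p * p) * (q1 * q1) * (q2 * q2).

Lemma alg (p e1 e2 : R) : p != 0 -> e1 != 0 -> e2 != 0 ->
  let q1 := e1 / p in let q2 := e2 / p in let c := p / (e1 * e2) in
  c ^+ 2 * (\sum_v \sum_v' \sum_(k1 < a v) \sum_(k2 < b v) \sum_(k1' < a v') \sum_(k2' < b v')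
      pv p q1 q2 v v' k1 k2 k1' k2')
  - (c * \sum_v \sum_(k1 < a v) \sum_(k2 < b v) (p * q1 * q2)) ^+ 2 =
  ((p^-1 - 1) * gamma a b 2 2
   + (e2^-1 - p^-1) * gamma a b 2 1
   + (e1^-1 - p^-1) * gamma a b 1 2
   + (p / (e1 * e2) - e1^-1 - e2^-1 + p^-1) * gamma a b 1 1).
Proof.
move=> p0 e10 e20 q1 q2 c.
have inner : forall v v', \sum_(k1 < a v) \sum_(k2 < b v) \sum_(k1' < a v') \sum_(k2' < b v')
      pv p q1 q2 v v' k1 k2 k1' k2' =
    if v == v' then p * ((a v)%:R * ((a v)%:R * (q1 * q1) + (q1 - q1 * q1)))
                   * ((b v)%:R * ((b v)%:R * (q2 * q2) + (q2 - q2 * q2)))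
    else (p * q1 * q2 * (a v)%:R * (b v)%:R) * (p * q1 * q2 * (a v')%:R * (b v')%:R).
  move=> v v'; rewrite /pv; have [e|ne] := eqVneq v v'.
    subst v'; rewrite -!sumA -mulrA big_distrlr /=.
    rewrite mulr_sumr; apply: eq_bigr => k1 _; rewrite mulr_sumr; apply: eq_bigr => k2 _.
    rewrite big_distrlr mulr_sumr; apply: eq_bigr => k1' _; rewrite mulr_sumr; apply: eq_bigr => k2' _.
    by rewrite !mulrA.
  rewrite !sum_ord_const; ring.
under eq_bigr => v _ do under eq_bigr => v' _ do rewrite inner.
under eq_bigr => v _ do rewrite (sum_if v _ (fun v' => p * q1 * q2 * (a v)%:R * (b v)%:R * (p * q1 * q2 * (a v')%:R * (b v')%:R))).
rewrite big_split /= -big_distrlr /=.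
have -> : \sum_v \sum_(k1 < a v) \sum_(k2 < b v) (p * q1 * q2) = \sum_v p * q1 * q2 * (a v)%:R * (b v)%:R.
  by apply: eq_bigr => v _; rewrite !sum_ord_const; ring.
have E : forall x y : R, c ^+ 2 * (x * x + y) - (c * x) ^+ 2 = c ^+ 2 * y.
  by move=> x y; ring.
rewrite E /gamma !mulr_sumr -!big_split /=.
apply: eq_bigr => v _.
rewrite /c /q1 /q2; field.
by rewrite p0 e10 e20.
Qed.
End A.
Arguments pv {R U a b}.


Section S.
Variables (R : realType) (d : measure_display) (T : measurableType d)
  (P : probability T R) (U : finType) (a b : U -> nat)
  (e1 e2 p : R)
  (h : U -> T -> R)
  (c1 : forall v : U, 'I_(a v) -> T -> bool)
  (c2 : forall v : U, 'I_(b v) -> T -> bool).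
Hypothesis p0 : 0 <= p.
Hypothesis p1 : p <= 1.
Hypothesis hu : forall v (B : set R), measurable B ->
     P (h v @^-1` B) = uniform_prob (@ltr01 R) B.
Hypothesis c1P : forall v k, P [set w | c1 v k w] = (e1 / p)%:E.
Hypothesis c2P : forall v k, P [set w | c2 v k w] = (e2 / p)%:E.
Hypothesis ind : ubs_independent P h c1 c2.
Hypothesis hm : forall v, measurable_fun setT (h v).
Hypothesis c1m : forall v k, measurable_fun setT (c1 v k).
Hypothesis c2m : forall v k, measurable_fun setT (c2 v k).

Lemma unif_lt : uniform_prob (@ltr01 R) `]-oo, p[ = p%:E.
Proof.
rewrite /uniform_prob integral_uniform_pdf.
have -> : `]-oo, p[ `&` `[0, 1] = `[0, p[%classic.
  apply/seteqP; split => x /=; rewrite !in_itv /=.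
    by move=> [xp /andP[x0 x1]]; rewrite x0 xp.
  move=> /andP[x0 xp]; split => //; rewrite x0 /=; exact: ltW (lt_le_trans xp p1).
rewrite (eq_integral (fun=> 1%:E)); last first.
  move=> x; rewrite inE /= in_itv /= /uniform_pdf => /andP[x0 xp].
  by rewrite x0 (ltW (lt_le_trans xp p1)) subr0 invr1.
rewrite integral_cst //= mul1e lebesgue_measure_itv /= lte_fin.
case: ltP => hp; first by rewrite oppr0 adde0.
by have -> : p = 0 by apply/le_anti; rewrite hp p0.
Qed.

Lemma prob_gen (SH : pred U) (S1 : forall v, pred 'I_(a v)) (S2 : forall v, pred 'I_(b v)) :
  P [set w | (forall v, SH v -> h v w < p) /\
             (forall v k, S1 v k -> c1 v k w) /\ (forall v k, S2 v k -> c2 v k w)] =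
  ((\prod_v (if SH v then p else 1)) *
   (\prod_v \prod_(k < a v) (if S1 v k then e1 / p else 1)) *
   (\prod_v \prod_(k < b v) (if S2 v k then e2 / p else 1)))%:E.
Proof.
pose A v : set R := if SH v then `]-oo, p[%classic else setT.
pose B1 v k : set bool := if S1 v k then [set true] else setT.
pose B2 v k : set bool := if S2 v k then [set true] else setT.
have mA : forall v, measurable (A v).
  by move=> v; rewrite /A; case: (SH v).
have := @ind A B1 B2 mA.
have -> : [set w | (forall v, A v (h v w)) /\ (forall v (k : 'I_(a v)), B1 v k (c1 v k w)) /\
               (forall v (k : 'I_(b v)), B2 v k (c2 v k w))] =
   [set w | (forall v, SH v -> h v w < p) /\
             (forall v k, S1 v k -> c1 v k w) /\ (forall v k, S2 v k -> c2 v k w)].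
  apply/seteqP; split => w /= [HA [HB1 HB2]]; (split; [|split]).
  - by move=> v Sv; move: (HA v); rewrite /A Sv /= in_itv /=.
  - by move=> v k Sv; move: (HB1 v k); rewrite /B1 Sv.
  - by move=> v k Sv; move: (HB2 v k); rewrite /B2 Sv.
  - by move=> v; rewrite /A; case: ifP => // Sv; rewrite /= in_itv /= HA.
  - by move=> v k; rewrite /B1; case: ifP => // Sv; rewrite /= HB1.
  - by move=> v k; rewrite /B2; case: ifP => // Sv; rewrite /= HB2.
move=> ->.
have fA v : P (h v @^-1` A v) = (if SH v then p else 1)%:E.
  rewrite /A; case: (SH v); first by rewrite hu // unif_lt.
  by rewrite preimage_setT probability_setT.
have f1 v k : P (c1 v k @^-1` B1 v k) = (if S1 v k then e1 / p else 1)%:E.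
  rewrite /B1; case: (S1 v k); last by rewrite preimage_setT probability_setT.
  by rewrite -(c1P v k); congr (P _); apply/seteqP; split => w /=.
have f2 v k : P (c2 v k @^-1` B2 v k) = (if S2 v k then e2 / p else 1)%:E.
  rewrite /B2; case: (S2 v k); last by rewrite preimage_setT probability_setT.
  by rewrite -(c2P v k); congr (P _); apply/seteqP; split => w /=.
rewrite (eq_bigr _ (fun v _ => fA v)).
rewrite (eq_bigr _ (fun v _ => eq_bigr _ (fun k _ => f1 v k))).
rewrite [X in (_ * X)%E](eq_bigr _ (fun v _ => eq_bigr _ (fun k _ => f2 v k))).
under [X in (_ * X * _)%E]eq_bigr => v _ do rewrite prodEFin.
under [X in (_ * X)%E]eq_bigr => v _ do rewrite prodEFin.
by rewrite !prodEFin -!EFinM.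
Qed.

Lemma Lfun_bool (B : T -> bool) : measurable_fun setT B ->
  (fun w => (B w)%:R : R) \in Lfun P 1.
Proof.
move=> mB.
have mS : measurable [set w | B w].
  have := mB measurableT [set true] I; rewrite setTI.
  by congr measurable; apply/seteqP; split => w /=.
have -> : (fun w => (B w)%:R : R) = \1_[set w | B w].
  by apply/funext => w; rewrite indicE mem_setE.
apply/Lfun1_integrable; exact: integrable_indic.
Qed.

Lemma E_bool (B : T -> bool) : measurable_fun setT B ->
  ('E_P[fun w => (B w)%:R] = P [set w | B w])%E.
Proof.
move=> mB.
have mS : measurable [set w | B w].
  have := mB measurableT [set true] I; rewrite setTI.
  by congr measurable; apply/seteqP; split => w /=.
have -> : (fun w => (B w)%:R : R) = \1_[set w | B w].
  by apply/funext => w; rewrite indicE mem_setE.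
exact: expectation_indic.
Qed.

Lemma Lfun_sum (I : finType) (F : I -> T -> R) : (forall i, F i \in Lfun P 1) ->
  (fun w => \sum_i F i w) \in Lfun P 1.
Proof.
move=> HF; rewrite -fct_sumE; apply: rpred_sum => i _; exact: HF.
Qed.

Lemma E_sum (I : finType) (F : I -> T -> R) : (forall i, F i \in Lfun P 1) ->
  ('E_P[fun w => (\sum_i F i w)%R] = \sum_i 'E_P[F i])%E.
Proof.
move=> HF; rewrite -fct_sumE.
elim: (index_enum I) => [|i r IH].
  by rewrite !big_nil -[0]/(cst (0:R)) expectation_cst.
rewrite !big_cons expectationD ?IH //.
by apply: rpred_sum => j _; exact: HF.
Qed.

Lemma eq_ordE n (i j : 'I_n) : (i == j :> nat) = (i == j).
Proof. by []. Qed.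

Lemma prod_two_fun (I : finType) (i0 i1 : I) (F : I -> R) :
  (forall i, i != i0 -> i != i1 -> F i = 1) ->
  \prod_i F i = if i0 == i1 then F i0 else F i0 * F i1.
Proof.
move=> H; rewrite (bigD1 i0) //=.
have [e|ne] := eqVneq i0 i1.
  subst i1.
  by rewrite big1 ?mulr1 // => i ii0; apply: H.
rewrite (bigD1 i1) /=; last by rewrite eq_sym ne.
rewrite big1 ?mulr1 ?mulrA // => i /andP[ni0 ni1]; exact: H.
Qed.

Arguments prod_two_fun {I} i0 i1 {F}.

Definition Ev v (k1 : 'I_(a v)) (k2 : 'I_(b v)) w :=
  (h v w < p) && c1 v k1 w && c2 v k2 w.

Lemma pair_prob v (k1 : 'I_(a v)) (k2 : 'I_(b v)) v' (k1' : 'I_(a v')) (k2' : 'I_(b v')) :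
  P [set w | Ev v k1 k2 w && Ev v' k1' k2' w] =
  (if v == v' then p * (if (k1 == k1' :> nat) then e1 / p else e1 / p * (e1 / p))
                     * (if (k2 == k2' :> nat) then e2 / p else e2 / p * (e2 / p))
   else (p * p) * (e1 / p * (e1 / p)) * (e2 / p * (e2 / p)))%:E.
Proof.
have -> : [set w | Ev v k1 k2 w && Ev v' k1' k2' w] =
  [set w | (forall x, (fun x => (x == v) || (x == v')) x -> h x w < p) /\
     (forall x k, (fun x (k : 'I_(a x)) => ((x == v) && (k == k1 :> nat)) || ((x == v') && (k == k1' :> nat))) x k -> c1 x k w) /\
     (forall x k, (fun x (k : 'I_(b x)) => ((x == v) && (k == k2 :> nat)) || ((x == v') && (k == k2' :> nat))) x k -> c2 x k w)].
  apply/seteqP; split => w /=.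
  - move=> /andP[/andP[/andP[H1 C1] D1] /andP[/andP[H2 C2] D2]]; split; [|split].
    + by move=> x /orP[]/eqP->.
    + by move=> x k /orP[]/andP[/eqP ? /eqP Hk]; subst x; rewrite (ord_inj Hk).
    + by move=> x k /orP[]/andP[/eqP ? /eqP Hk]; subst x; rewrite (ord_inj Hk).
  - move=> [HH [HC1 HC2]].
    have t1 : h v w < p by apply: HH; rewrite eqxx.
    have t2 : h v' w < p by apply: HH; rewrite eqxx orbT.
    have t3 : c1 v k1 w by apply: HC1; rewrite !eqxx.
    have t4 : c1 v' k1' w by apply: HC1; rewrite !eqxx orbT.
    have t5 : c2 v k2 w by apply: HC2; rewrite !eqxx.
    have t6 : c2 v' k2' w by apply: HC2; rewrite !eqxx orbT.
    by rewrite /Ev t1 t2 t3 t4 t5 t6.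
rewrite prob_gen; congr EFin.
have [e|nv] := eqVneq v v'.
  subst v'.
  rewrite (prod_two_fun v v); last by move=> x /negbTE ->.
  rewrite (prod_two_fun v v (F := fun x => \prod_(k < a x) _)); last first.
    by move=> x /negbTE nx _; rewrite big1 // => k _; rewrite nx.
  rewrite (prod_two_fun v v (F := fun x => \prod_(k < b x) _)); last first.
    by move=> x /negbTE nx _; rewrite big1 // => k _; rewrite nx.
  rewrite !eqxx /=.
  rewrite (prod_two_fun k1 k1'); last by move=> i; rewrite !eq_ordE => /negbTE -> /negbTE ->.
  rewrite (prod_two_fun k2 k2'); last by move=> i; rewrite !eq_ordE => /negbTE -> /negbTE ->.
  by rewrite !eqxx /= !orbT !eq_ordE.
rewrite (prod_two_fun v v'); last by move=> x /negbTE -> /negbTE ->.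
rewrite (prod_two_fun v v' (F := fun x => \prod_(k < a x) _)); last first.
  by move=> x /negbTE nx /negbTE nx'; rewrite big1 // => k _; rewrite nx nx'.
rewrite (prod_two_fun v v' (F := fun x => \prod_(k < b x) _)); last first.
  by move=> x /negbTE nx /negbTE nx'; rewrite big1 // => k _; rewrite nx nx'.
rewrite (negbTE nv) !eqxx eq_sym (negbTE nv) /=.
rewrite (prod_two_fun k1 k1); last by move=> i; rewrite !eq_ordE => /negbTE -> _.
rewrite (prod_two_fun k2 k2); last by move=> i; rewrite !eq_ordE => /negbTE -> _.
rewrite (prod_two_fun k1' k1'); last by move=> i; rewrite !eq_ordE => /negbTE -> _.
rewrite (prod_two_fun k2' k2'); last by move=> i; rewrite !eq_ordE => /negbTE -> _.
by rewrite !eqxx.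
Qed.

Lemma mEv v k1 k2 : measurable_fun setT (Ev v k1 k2).
Proof.
rewrite /Ev; apply: measurable_and; [apply: measurable_and|].
- exact: measurable_fun_ltr (hm v) (measurable_cst p).
- exact: c1m.
- exact: c2m.
Qed.

Definition X : T -> R := fun w => \sum_v \sum_(k1 < a v) \sum_(k2 < b v) (Ev v k1 k2 w)%:R.
Definition XX : T -> R := fun w => \sum_v \sum_v' \sum_(k1 < a v) \sum_(k2 < b v)
   \sum_(k1' < a v') \sum_(k2' < b v') (Ev v k1 k2 w && Ev v' k1' k2' w)%:R.

Lemma join_X w : join_size p h c1 c2 w = X w.
Proof.
rewrite /join_size /X; apply: eq_bigr => v _.
rewrite exchange_big /= (bigD1 v) //= [Z in _ + Z]big1 ?addr0; last first.
  move=> v2 nv2; apply: big1 => k1 _; apply: big1 => k2 _.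
  by rewrite eq_sym (negbTE nv2).
apply: eq_bigr => k1 _; apply: eq_bigr => k2 _.
rewrite eqxx /ubs_in /Ev /=.
by case: (h v w < p); case: (c1 v k1 w).
Qed.

Lemma XX_eq w : X w * X w = XX w.
Proof.
rewrite /X /XX mulr_suml; apply: eq_bigr => v _.
rewrite mulr_sumr; apply: eq_bigr => v' _.
rewrite mulr_suml; apply: eq_bigr => k1 _.
rewrite mulr_suml; apply: eq_bigr => k2 _.
rewrite mulr_sumr; apply: eq_bigr => k1' _.
rewrite mulr_sumr; apply: eq_bigr => k2' _.
by rewrite -natrM mulnb.
Qed.

Lemma LX : X \in Lfun P 1.
Proof.
rewrite /X; apply: Lfun_sum => v; apply: Lfun_sum => k1; apply: Lfun_sum => k2.
apply: Lfun_bool; exact: mEv.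
Qed.

Lemma LXX : XX \in Lfun P 1.
Proof.
rewrite /XX; apply: Lfun_sum => v; apply: Lfun_sum => v'; apply: Lfun_sum => k1.
apply: Lfun_sum => k2; apply: Lfun_sum => k1'; apply: Lfun_sum => k2'.
apply: Lfun_bool; apply: measurable_and; exact: mEv.
Qed.

Lemma EX : ('E_P[X] = (\sum_v \sum_(k1 < a v) \sum_(k2 < b v) (p * (e1 / p) * (e2 / p)))%:E)%E.
Proof.
rewrite /X E_sum; last first.
  move=> v; apply: Lfun_sum => k1; apply: Lfun_sum => k2.
  apply: Lfun_bool; exact: mEv.
rewrite -sumEFin; apply: eq_bigr => v _.
rewrite E_sum; last first.
  move=> k1; apply: Lfun_sum => k2; apply: Lfun_bool; exact: mEv.
rewrite -sumEFin; apply: eq_bigr => k1 _.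
rewrite E_sum; last by move=> k2; apply: Lfun_bool; exact: mEv.
rewrite -sumEFin; apply: eq_bigr => k2 _.
rewrite E_bool; last exact: mEv.
have -> : [set w | Ev v k1 k2 w] = [set w | Ev v k1 k2 w && Ev v k1 k2 w].
  by apply/seteqP; split => w /=; rewrite andbb.
by rewrite pair_prob !eqxx.
Qed.

Lemma EXX : ('E_P[XX] = (\sum_v \sum_v' \sum_(k1 < a v) \sum_(k2 < b v)
   \sum_(k1' < a v') \sum_(k2' < b v') pv p (e1 / p) (e2 / p) v v' k1 k2 k1' k2')%:E)%E.
Proof.
have mB : forall v v' (k1 : 'I_(a v)) (k2 : 'I_(b v)) (k1' : 'I_(a v')) (k2' : 'I_(b v')),
  measurable_fun setT (fun w => Ev v k1 k2 w && Ev v' k1' k2' w).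
  by move=> *; apply: measurable_and; exact: mEv.
rewrite /XX E_sum; last first.
  move=> v; apply: Lfun_sum => v'; apply: Lfun_sum => k1.
  apply: Lfun_sum => k2; apply: Lfun_sum => k1'; apply: Lfun_sum => k2'.
  apply: Lfun_bool; exact: mB.
rewrite -sumEFin; apply: eq_bigr => v _.
rewrite E_sum; last first.
  move=> v'; apply: Lfun_sum => k1.
  apply: Lfun_sum => k2; apply: Lfun_sum => k1'; apply: Lfun_sum => k2'.
  apply: Lfun_bool; exact: mB.
rewrite -sumEFin; apply: eq_bigr => v' _.
rewrite E_sum; last first.
  move=> k1; apply: Lfun_sum => k2; apply: Lfun_sum => k1'; apply: Lfun_sum => k2'.
  apply: Lfun_bool; exact: mB.
rewrite -sumEFin; apply: eq_bigr => k1 _.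
rewrite E_sum; last first.
  move=> k2; apply: Lfun_sum => k1'; apply: Lfun_sum => k2'.
  apply: Lfun_bool; exact: mB.
rewrite -sumEFin; apply: eq_bigr => k2 _.
rewrite E_sum; last first.
  move=> k1'; apply: Lfun_sum => k2'; apply: Lfun_bool; exact: mB.
rewrite -sumEFin; apply: eq_bigr => k1' _.
rewrite E_sum; last by move=> k2'; apply: Lfun_bool; exact: mB.
rewrite -sumEFin; apply: eq_bigr => k2' _.
by rewrite E_bool ?pair_prob.
Qed.
End S.


Theorem theorem4 (R : realType) (d : measure_display) (T : measurableType d)
  (P : probability T R) (U : finType) (a b : U -> nat)
  (e1 e2 p : R)
  (h : U -> T -> R)
  (c1 : forall v : U, 'I_(a v) -> T -> bool)
  (c2 : forall v : U, 'I_(b v) -> T -> bool) :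
  0 < e1 <= 1 -> 0 < e2 <= 1 -> Num.max e1 e2 <= p <= 1 ->
  (* hash values: measurable, uniform on [0,1] *)
  (forall v, measurable_fun setT (h v)) ->
  (forall v (B : set R), measurable B ->
     P (h v @^-1` B) = uniform_prob (@ltr01 R) B) ->
  (* Bernoulli coins with success probabilities q1 = e1/p, q2 = e2/p *)
  (forall v k, measurable_fun setT (c1 v k)) ->
  (forall v k, measurable_fun setT (c2 v k)) ->
  (forall v k, P [set w | c1 v k w] = (e1 / p)%:E) ->
  (forall v k, P [set w | c2 v k w] = (e2 / p)%:E) ->
  (* everything mutually independent *)
  ubs_independent P h c1 c2 ->
  'V_P[fun w => p / (e1 * e2) * join_size p h c1 c2 w] =
  ((p^-1 - 1) * gamma a b 2 2
   + (e2^-1 - p^-1) * gamma a b 2 1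
   + (e1^-1 - p^-1) * gamma a b 1 2
   + (p / (e1 * e2) - e1^-1 - e2^-1 + p^-1) * gamma a b 1 1)%:E.
Proof.
move=> /andP[e10 e11] /andP[e20 e21] /andP[hmax p1] hm hu c1m c2m c1P c2P ind.
have pgt0 : 0 < p.
  by apply: lt_le_trans e10 (le_trans _ hmax); rewrite le_max lexx.
have p0 : 0 <= p := ltW pgt0.
set c := p / (e1 * e2).
have -> : (fun w => c * join_size p h c1 c2 w) = c \o* X R d T U a b p h c1 c2.
  by apply/funext => w; rewrite /= join_X mulrC.
have LX' := @LX _ _ _ P _ _ _ _ _ _ _ hm c1m c2m.
have LXX' := @LXX _ _ _ P _ _ _ _ _ _ _ hm c1m c2m.
have prodE : ((c \o* X R d T U a b p h c1 c2) * (c \o* X R d T U a b p h c1 c2))%R = (c ^+ 2) \o* XX R d T U a b p h c1 c2.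
  apply/funext => w; rewrite /= -XX_eq.
  transitivity ((X R d T U a b p h c1 c2 w * c) * (X R d T U a b p h c1 c2 w * c)); first by [].
  ring.
rewrite /variance covarianceE; last first.
- by rewrite prodE Lfun_scale.
- by rewrite Lfun_scale.
- by rewrite Lfun_scale.
rewrite prodE !expectationZl // (@EX _ _ _ P _ _ _ e1 e2 p _ _ _ p0 p1 hu c1P c2P ind hm c1m c2m).
rewrite (@EXX _ _ _ P _ _ _ e1 e2 p _ _ _ p0 p1 hu c1P c2P ind hm c1m c2m).
rewrite -!EFinM -EFinB; congr EFin.
rewrite -expr2.
have := @alg R U a b p e1 e2 (lt0r_neq0 pgt0) (lt0r_neq0 e10) (lt0r_neq0 e20).
by [].
Qed.
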